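(* For $n\ge1$, let $X_n=K_4'^{\,\Box n}$ be the $n$-fold Cartesian product of $K_4'$ with itself. Then $\rho(X_n)=3n$ and $\lambda_1(X_n)=n$.
   Context: For a digraph $X$ (finite vertex set, arcs are ordered pairs of distinct vertices), $H(X)$ has $(u,v)$-entry $1$ if $uv$ and $vu$ are arcs, $i$ if only $uv$ is an arc, $-i$ if only $vu$ is an arc, and $0$ otherwise; $\lambda_1(X)$ is its largest eigenvalue and $\rho(X)$ the largest absolute value of an eigenvalue. $K_4'$ is the digraph on $x_1,x_2,x_3,x_4$ with arcs $x_1x_2,x_2x_3,x_3x_4,x_4x_1$ together with the digons $\{x_1,x_3\}$ and $\{x_2,x_4\}$ (i.e., both arcs $x_1x_3,x_3x_1$ and both $x_2x_4,x_4x_2$). The Cartesian product $X\,\Box\,Y$ has vertex set $V(X)\times V(Y)$ and an arc from $(x_1,y_1)$ to $(x_2,y_2)$ whenever either $x_1x_2$ is an arc of $X$ and $y_1=y_2$, or $y_1y_2$ is an arc of $Y$ and $x_1=x_2$. *)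

(* Defs.v *)
From HB Require Import structures.
From mathcomp Require Import all_boot all_order all_algebra.
From mathcomp Require Import algC.
Set Implicit Arguments. Unset Strict Implicit. Unset Printing Implicit Defensive.
Import Order.TTheory GRing.Theory Num.Theory.
Local Open Scope ring_scope.

Record digraph := Digraph { dvert : finType; darc : rel dvert }.

Definition hermadj (X : digraph) : 'M[algC]_#|dvert X| :=
  \matrix_(i, j)
    (let u := enum_val i in let v := enum_val j in
     if darc u v && darc v u then 1
     else if darc u v then 'i
     else if darc v u then - 'i
     else 0).

Definition is_lambda1 (m : nat) (A : 'M[algC]_m) (lam : algC) : Prop :=
  eigenvalue A lam /\ (forall mu, eigenvalue A mu -> mu <= lam).

Definition is_spectral_radius (m : nat) (A : 'M[algC]_m) (r : algC) : Prop :=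
  (exists2 mu, eigenvalue A mu & `|mu| = r) /\
  (forall mu, eigenvalue A mu -> `|mu| <= r).

Definition dcart (X Y : digraph) : digraph :=
  @Digraph (dvert X * dvert Y)%type
    (fun p q => (darc p.1 q.1 && (p.2 == q.2)) || (darc p.2 q.2 && (p.1 == q.1))).

(* K_4' on x1,x2,x3,x4 = 0,1,2,3 *)
Definition K4'_arc (u v : 'I_4) : bool :=
  let a := nat_of_ord u in let b := nat_of_ord v in
  [|| (a == 0) && (b == 1), (a == 1) && (b == 2), (a == 2) && (b == 3),
      (a == 3) && (b == 0),
      (a == 0) && (b == 2), (a == 2) && (b == 0),
      (a == 1) && (b == 3) | (a == 3) && (b == 1)]%N.

Definition K4' : digraph := @Digraph 'I_4 K4'_arc.

(* kpow m = K_4' box ... box K_4' with m+1 factors *)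
Fixpoint kpow (m : nat) : digraph :=
  match m with
  | 0 => K4'
  | m'.+1 => dcart (kpow m') K4'
  end.

Definition Xn (n : nat) : digraph := kpow n.-1.

(* Main.v *)
Require Import Defs.
From mathcomp Require Import all_boot all_order all_algebra algC.
From mathcomp Require Import ring zify.
Import Order.TTheory GRing.Theory Num.Theory.
Local Open Scope ring_scope.

Definition hent {X : digraph} (u v : dvert X) : algC :=
  if darc u v && darc v u then 1
  else if darc u v then 'i
  else if darc v u then - 'i
  else 0.

Lemma iiN : 'i * - 'i = 1 :> algC. Proof. by rewrite mulrN mulCii opprK. Qed.
Lemma Nii : - 'i * 'i = 1 :> algC. Proof. by rewrite mulNr mulCii opprK. Qed.
Lemma NiNi : - 'i * - 'i = -1 :> algC. Proof. by rewrite mulrNN mulCii. Qed.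

Lemma K4_id (u w : 'I_4) :
  \sum_v @hent K4' u v * hent v w = 3 * (u == w)%:R - 2 * @hent K4' u w.
Proof.
rewrite !big_ord_recl big_ord0 /hent /=.
case: u => [[|[|[|[|u]]]] Hu]; case: w => [[|[|[|[|w]]]] Hw] //=;
  rewrite /bump /= ?mulCii ?iiN ?Nii ?NiNi ?mulr0 ?mul0r ?mulr1 ?mul1r; try ring.
Qed.

Definition ev (X : digraph) (mu : algC) :=
  exists2 f : dvert X -> algC, (forall v, \sum_u f u * hent u v = mu * f v)
     & (exists x, f x != 0).

Lemma ev_K4_1 : ev K4' 1.
Proof.
exists (fun _ => 1); last by exists ord0; rewrite oner_neq0.
move=> v; rewrite !big_ord_recl big_ord0 /hent /=.
case: v => [[|[|[|[|v]]]] Hv] //=; rewrite /bump /= ?mulr0 ?mul1r ?mulr1; ring.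
Qed.

Definition vm3 (u : 'I_4) : algC :=
  match val u with 0 => 1 | 1 => - 'i | 2 => -1 | _ => 'i end.

Lemma ev_K4_3 : ev K4' (-3).
Proof.
exists vm3; last by exists ord0; rewrite oner_neq0.
move=> v; rewrite !big_ord_recl big_ord0 /hent /vm3 /=.
case: v => [[|[|[|[|v]]]] Hv] //=;
 rewrite /bump /= ?mulCii ?iiN ?Nii ?NiNi ?mulr0 ?mul0r ?mulr1 ?mul1r; try ring.
Qed.

Lemma ev_K4_inv mu : ev K4' mu -> mu = 1 \/ mu = -3.
Proof.
move=> [f Hf [x fx]].
have : (mu - 1) * (mu + 3) * f x = 0.
  have -> : (mu - 1) * (mu + 3) * f x = mu * (mu * f x) + 2 * (mu * f x) - 3 * f x by ring.
  rewrite -!Hf mulr_sumr.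
  under eq_bigr => u _ do rewrite mulrA -Hf mulr_suml.
  rewrite exchange_big /=.
  under eq_bigr => j _ do under eq_bigr => i _ do rewrite -mulrA.
  under eq_bigr => j _ do rewrite -mulr_sumr K4_id mulrBr mulrCA [f j * (2 * _)]mulrCA.
  rewrite sumrB -mulr_sumr (bigD1 x) //= eqxx mulr1 big1 ?addr0.
  rewrite -mulr_sumr; ring.
  by move=> j /negbTE ->; rewrite /= mulr0.
move/eqP; rewrite !mulf_eq0 (negbTE fx) orbF => /orP[]; rewrite ?subr_eq0 ?addr_eq0 => /eqP ->; auto.
Qed.

Definition irr (X : digraph) := forall x : dvert X, darc x x = false.

Lemma irr_K4 : irr K4'.
Proof. by case=> [[|[|[|[|x]]]] Hx]. Qed.

Lemma irr_cart X Y : irr X -> irr Y -> irr (dcart X Y).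
Proof. by move=> hX hY [a b]; rewrite /= hX hY. Qed.

Lemma irr_kpow m : irr (kpow m).
Proof. elim: m => [|m IH] /=; [exact: irr_K4 | exact: irr_cart IH irr_K4]. Qed.

Lemma hent_cart X Y (hX : irr X) (hY : irr Y) a b c d :
  @hent (dcart X Y) (a, b) (c, d) =
    (b == d)%:R * hent a c + (a == c)%:R * hent b d.
Proof.
rewrite /hent /=.
case: (eqVneq b d) => [<-|bd]; case: (eqVneq a c) => [<-|ac];
  rewrite ?hX ?hY /= ?andbT ?andbF ?orbF ?mul1r ?mul0r ?addr0 ?add0r //.
Qed.

Lemma sum_cart X Y (hX : irr X) (hY : irr Y) (F : dvert X * dvert Y -> algC) c d :
  \sum_(p : dvert (dcart X Y)) F p * hent p (c, d) =
  \sum_a F (a, d) * hent a c + \sum_b F (c, b) * hent b d.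
Proof.
rewrite [LHS](_ : _ = \sum_a \sum_b F (a,b) * @hent (dcart X Y) (a,b) (c,d)); last first.
  by rewrite pair_big /=; apply: eq_bigr => -[].
under eq_bigr => a _ do under eq_bigr => b _ do rewrite hent_cart // mulrDr.
under eq_bigr => a _ do rewrite big_split /=.
rewrite big_split /=; congr (_ + _).
  apply: eq_bigr => a _; rewrite (bigD1 d) //= eqxx mul1r big1 ?addr0 //.
  by move=> b /negbTE ->; rewrite mul0r mulr0.
rewrite exchange_big /=; apply: eq_bigr => b _.
rewrite (bigD1 c) //= eqxx mul1r big1 ?addr0 //.
by move=> a /negbTE ->; rewrite mul0r mulr0.
Qed.

Lemma ev_cart X Y (hX : irr X) (hY : irr Y) a b :
  ev X a -> ev Y b -> ev (dcart X Y) (a + b).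
Proof.
move=> [g Hg [x gx]] [k Hk [y ky]].
exists (fun p : dvert X * dvert Y => g p.1 * k p.2); last by exists (x, y); rewrite mulf_neq0.
move=> [c d]; rewrite sum_cart //=.
under eq_bigr => u _ do rewrite mulrAC.
rewrite -mulr_suml Hg.
under eq_bigr => u _ do rewrite -mulrA.
rewrite -mulr_sumr Hk; ring.
Qed.

Section Step.
Context {X : digraph}.
Definition LX (F : dvert X * 'I_4 -> algC) (p : dvert X * 'I_4) :=
  \sum_a F (a, p.2) * @hent X a p.1.
Definition LY (F : dvert X * 'I_4 -> algC) (p : dvert X * 'I_4) :=
  \sum_b F (p.1, b) * @hent K4' b p.2.

Lemma LX_ext F G p : (forall q, F q = G q) -> LX F p = LX G p.
Proof. by move=> H; apply: eq_bigr => a _; rewrite H. Qed.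
Lemma LY_ext F G p : (forall q, F q = G q) -> LY F p = LY G p.
Proof. by move=> H; apply: eq_bigr => a _; rewrite H. Qed.

Lemma LX_lin F G al be p :
  LX (fun q => al * F q + be * G q) p = al * LX F p + be * LX G p.
Proof.
rewrite /LX !mulr_sumr -big_split; apply: eq_bigr => a _ /=; ring.
Qed.
Lemma LY_lin F G al be p :
  LY (fun q => al * F q + be * G q) p = al * LY F p + be * LY G p.
Proof.
rewrite /LY !mulr_sumr -big_split; apply: eq_bigr => a _ /=; ring.
Qed.

Lemma LXY F p : LX (LY F) p = LY (LX F) p.
Proof.
rewrite /LX /LY /=.
under eq_bigr => a _ do rewrite mulr_suml.
under [RHS]eq_bigr => b _ do rewrite mulr_suml.
rewrite exchange_big /=; apply: eq_bigr => b _; apply: eq_bigr => a _; ring.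
Qed.

Lemma LYY F p : LY (LY F) p = 3 * F p - 2 * LY F p.
Proof.
rewrite /LY /=.
under eq_bigr => a _ do rewrite mulr_suml.
rewrite exchange_big /=.
under eq_bigr => b _ do (under eq_bigr => a _ do rewrite -mulrA; rewrite -mulr_sumr K4_id mulrBr mulrCA [F _ * (2 * _)]mulrCA).
rewrite sumrB -mulr_sumr -mulr_sumr (bigD1 p.2) //= eqxx mulr1 big1 ?addr0.
  by case: p.
by move=> j /negbTE ->; rewrite /= mulr0.
Qed.

End Step.

Lemma ev_step X (hX : irr X) mu :
  ev (dcart X K4') mu -> ev X (mu - 1) \/ ev X (mu + 3).
Proof.
move=> [f Hf [x fx]].
have LXf0 p : LX f p + LY f p = mu * f p.
  by case: p => c d; rewrite -Hf (@sum_cart X K4' hX irr_K4 f c d).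
have LXf p : LX f p = mu * f p - LY f p by rewrite -LXf0 addrK.
pose w q := 1 * LY f q + 3 * f q.
pose u q := 1 * LY f q + (-1) * f q.
have key p : LY (LX f) p = mu * LY f p - 3 * f p + 2 * LY f p.
  rewrite (@LY_ext X (LX f) (fun q => mu * f q + (-1) * LY f q)); last first.
    by move=> q; rewrite LXf; ring.
  rewrite LY_lin LYY; ring.
have Hw p : LX w p = (mu - 1) * w p.
  rewrite /w LX_lin LXY key LXf; ring.
have Hu p : LX u p = (mu + 3) * u p.
  rewrite /u LX_lin LXY key LXf; ring.
have : w x - u x = 4 * f x by rewrite /w /u; ring.
case: (eqVneq (w x) 0) => [w0|wn0].
  case: (eqVneq (u x) 0) => [u0|un0].
    rewrite w0 u0 subrr => /eqP; rewrite eq_sym mulf_eq0 (negbTE fx) orbF.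
    by rewrite pnatr_eq0.
  move=> _; right; exists (fun a => u (a, x.2)); last by exists x.1; case: x un0 {fx w0}.
  by move=> c; have := Hu (c, x.2); rewrite /LX.
move=> _; left; exists (fun a => w (a, x.2)); last by exists x.1; case: x wn0 {fx}.
by move=> c; have := Hw (c, x.2); rewrite /LX.
Qed.

Lemma spec_kpow m mu : ev (kpow m) mu ->
  exists2 k, (k <= m.+1)%N & mu = (m.+1)%:R - (4 * k)%:R.
Proof.
elim: m mu => [|m IH] mu /=.
  move/ev_K4_inv => [->|->]; [exists 0%N => //; rewrite subr0 //|exists 1%N => //].
  rewrite /=; ring.
move/(@ev_step _ (irr_kpow m) mu) => [/IH [k Hk E]|/IH [k Hk E]].
  exists k; first by apply: leqW.
  rewrite -(subrK 1 mu) E -[m.+2]addn1 natrD; ring.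
exists k.+1; first by [].
rewrite -(addrK 3 mu) E mulnS natrD -[m.+2]addn1 natrD; ring.
Qed.

Lemma ev_kpow_top m : ev (kpow m) (m.+1)%:R.
Proof.
elim: m => [|m IH] /=; first exact: ev_K4_1.
rewrite -[m.+2]addn1 natrD; exact: (@ev_cart _ _ (irr_kpow m) irr_K4 _ _) IH ev_K4_1.
Qed.

Lemma ev_kpow_bot m : ev (kpow m) (- (3 * m.+1)%:R).
Proof.
elim: m => [|m IH] /=; first exact: ev_K4_3.
have -> : (- (3 * m.+2)%:R : algC) = - (3 * m.+1)%:R + -3.
  by rewrite -[m.+2]addn1 !natrM natrD; ring.
exact: (@ev_cart _ _ (irr_kpow m) irr_K4 _ _) IH ev_K4_3.
Qed.

Lemma hermadjE X i j : hermadj X i j = hent (enum_val i) (enum_val j).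
Proof. by rewrite mxE. Qed.

Lemma ev_eig X mu : eigenvalue (hermadj X) mu <-> ev X mu.
Proof.
have bij : bijective (@enum_rank (dvert X)).
  by exists enum_val; [apply: enum_rankK | apply: enum_valK].
split.
  move/eigenvalueP => [v Hv vn0].
  exists (fun u => v 0 (enum_rank u)).
    move=> w; have := congr1 (fun M : 'rV_ _ => M 0 (enum_rank w)) Hv => /=.
    rewrite !mxE (reindex _ (onW_bij _ bij)) /= => <-.
    by apply: eq_bigr => u _; rewrite hermadjE !enum_rankK.
  have [j vj] : exists j, v 0 j != 0.
    apply/existsP; move: vn0; apply: contraR; rewrite negb_exists => /forallP H.
    by apply/eqP/rowP => j; rewrite mxE; move: (H j); rewrite negbK => /eqP.
  by exists (enum_val j); rewrite enum_valK.
move=> [f Hf [x fx]]; apply/eigenvalueP.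
exists (\row_j f (enum_val j)).
  apply/rowP => k; rewrite !mxE (reindex _ (onW_bij _ bij)) /= -Hf.
  by apply: eq_bigr => u _; rewrite !mxE !enum_rankK.
apply/negP => /eqP v0; have := congr1 (fun M : 'rV_ _ => M 0 (enum_rank x)) v0.
by rewrite !mxE enum_rankK; apply/eqP.
Qed.

Theorem proposition5p5 (n : nat) (hn : (1 <= n)%N) :
  is_spectral_radius (hermadj (Xn n)) (3 * n)%:R /\
  is_lambda1 (hermadj (Xn n)) n%:R.
Proof.
rewrite /Xn; case: n hn => [//|m] _ /=.
split; split.
- exists (- (3 * m.+1)%:R); first exact/ev_eig/ev_kpow_bot.
  by rewrite normrN normr_nat.
- move=> mu /ev_eig /spec_kpow [k Hk ->].
  rewrite !pmulrn -intrB -intr_norm ler_int; lia.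
- exact/ev_eig/ev_kpow_top.
- move=> mu /ev_eig /spec_kpow [k Hk ->].
  by rewrite gerBl ler0n.
Qed.
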